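(* Let $A,A'\in\mathbb{C}^{n\times n}$ with $\|A\|_F=\|A'\|_F=1$, let $v,v'\in\mathbb{C}^n$ be nonzero, and let $\lambda,\lambda'\in\mathbb{C}$ with $Av=\lambda v$. Suppose $\mu(A,\lambda,v)\big(\|A'-A\|_F+|\lambda'-\lambda|+d_{\mathbb{P}}(v',v)\big)\le\frac{\varepsilon}{7.2}$ for some $0<\varepsilon\le0.37$. Then $\frac1{1+\varepsilon}\mu(A,\lambda,v)\le\mu(A',\lambda',v')\le(1+\varepsilon)\mu(A,\lambda,v)$.
   Context: $\|\cdot\|_F$ is the Frobenius norm. $d_{\mathbb{P}}(v,v')=\arccos(|\langle v,v'\rangle|/(\|v\|\|v'\|))$. For $v\ne0$, $T_v=v^\perp$, $P_{v^\perp}$ the orthogonal projection onto $T_v$, $A_{\lambda,v}=P_{v^\perp}(A-\lambda\mathrm{Id})|_{T_v}$, and $\mu(A,\lambda,v)=\|A\|_F\|A_{\lambda,v}^{-1}\|$ (operator norm; $\infty$ if not invertible). *)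

(* Defs.v *)
From mathcomp Require Import all_boot all_order all_algebra.
From mathcomp Require Import all_classical all_reals all_analysis.
From mathcomp Require Import complex.
Set Implicit Arguments. Unset Strict Implicit. Unset Printing Implicit Defensive.
Import Order.TTheory GRing.Theory Num.Theory.
Local Open Scope ring_scope.

Section Defs.
Variable R : realType.
Variable n : nat.
Local Notation C := (R[i]).

Definition absC (z : C) : R := Normc.normc z.

Definition inner (v w : 'cV[C]_n) : C := \sum_i (conjc (v i 0)) * w i 0.

Definition vnorm (v : 'cV[C]_n) : R := Num.sqrt (\sum_i absC (v i 0) ^+ 2).

Definition frob (A : 'M[C]_n) : R := Num.sqrt (\sum_i \sum_j absC (A i j) ^+ 2).

Definition dP (v v' : 'cV[C]_n) : R := acos (absC (inner v v') / (vnorm v * vnorm v')).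

Definition inT (v w : 'cV[C]_n) : Prop := inner v w = 0.

Definition projperp (v w : 'cV[C]_n) : 'cV[C]_n := w - (inner v w / inner v v) *: v.

Definition Alv (A : 'M[C]_n) (lam : C) (v w : 'cV[C]_n) : 'cV[C]_n :=
  projperp v ((A - lam%:M) *m w).

Definition Alv_invertible (A : 'M[C]_n) (lam : C) (v : 'cV[C]_n) : Prop :=
  (forall w, inT v w -> Alv A lam v w = 0 -> w = 0) /\
  (forall y, inT v y -> exists2 w, inT v w & Alv A lam v w = y).

(* operator norm of the inverse of A_{lambda,v}:
   sup { |A_{lambda,v}^{-1} y| : y in T_v, |y| <= 1 }, where the inverse image of y
   is the (unique, when invertible) w in T_v with A_{lambda,v} w = y *)
Definition Alv_inv_opnorm (A : 'M[C]_n) (lam : C) (v : 'cV[C]_n) : \bar R :=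
  ereal_sup [set (vnorm w)%:E | w in
     [set w | inT v w /\ exists y, [/\ inT v y, vnorm y <= 1 & Alv A lam v w = y]]].

Definition mu (A : 'M[C]_n) (lam : C) (v : 'cV[C]_n) : \bar R :=
  if `[< Alv_invertible A lam v >] then ((frob A)%:E * Alv_inv_opnorm A lam v)%E
  else +oo%E.

End Defs.

(* Main.v *)
Require Import Defs.
From mathcomp Require Import all_boot all_order all_algebra.
From mathcomp Require Import all_classical all_reals all_analysis.
From mathcomp Require Import complex.
From mathcomp Require Import ring lra.
Import Order.TTheory GRing.Theory Num.Theory numFieldNormedType.Exports.
Set Implicit Arguments. Unset Strict Implicit. Unset Printing Implicit Defensive.
Local Open Scope ring_scope.

Section Scalar.
Variable R : realType.
Local Notation C := (R[i]).
Implicit Types z : C.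

Lemma absC_ge0 z : 0 <= absC z.
Proof. by case: z => a b; rewrite /absC /= sqrtr_ge0. Qed.

Lemma absC_def z : ((absC z)%:C)%C = `|z|.
Proof. by rewrite normc_def; case: z. Qed.

Lemma absC_sq z : (((absC z) ^+ 2)%:C)%C = z * conjc z.
Proof. by rewrite rmorphXn /= absC_def sqr_normc. Qed.

Lemma absCM z1 z2 : absC (z1 * z2) = absC z1 * absC z2.
Proof. exact: Normc.normcM. Qed.

Lemma absCD z1 z2 : absC (z1 + z2) <= absC z1 + absC z2.
Proof. exact: le_normcD. Qed.

Lemma absCN z : absC (- z) = absC z.
Proof. exact: normcN. Qed.

Lemma absC0 : absC (0 : C) = 0.
Proof. exact: Normc.normc0. Qed.

Lemma absC_eq0 z : absC z = 0 -> z = 0.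
Proof. exact: Normc.eq0_normc. Qed.

Lemma absCJ z : absC (conjc z) = absC z.
Proof. by apply: (@complexI R); rewrite !absC_def normcJ. Qed.

Lemma absCV z : absC (z^-1) = (absC z)^-1.
Proof. exact: Normc.normcV. Qed.

Lemma absC_real (r : R) : absC ((r%:C)%C) = `|r|.
Proof. by rewrite /absC /= expr0n /= addr0 sqrtr_sqr. Qed.

Lemma Re_le_absC z : complex.Re z <= absC z.
Proof.
have := normc_ge_Re z; rewrite -absC_def lecR => h.
exact: le_trans (ler_norm _) h.
Qed.

Lemma absCB z1 z2 : absC (z1 - z2) <= absC z1 + absC z2.
Proof. by rewrite -(absCN z2) absCD. Qed.

Lemma absC_sum (I : finType) (F : I -> C) :
  absC (\sum_i F i) <= \sum_i absC (F i).
Proof.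
apply: (big_rec2 (fun x y => absC x <= y)); first by rewrite absC0.
move=> i y1 y2 _ h; apply: le_trans (absCD _ _) _; by rewrite lerD2l.
Qed.

End Scalar.

Section CS.
Variable R : rcfType.

Lemma cs_real (I : finType) (a b : I -> R) :
  (\sum_i a i * b i) ^+ 2 <= (\sum_i a i ^+ 2) * (\sum_i b i ^+ 2).
Proof.
set P := \sum_i a i * b i; set A := \sum_i a i ^+ 2; set B := \sum_i b i ^+ 2.
have B0 : 0 <= B by apply: sumr_ge0 => i _; exact: sqr_ge0.
have [Be0|Bgt0] := eqVneq B 0.
  have b0 : forall i, b i = 0.
    move=> i; have := Be0; rewrite /B => /eqP; rewrite psumr_eq0; last first.
      by move=> j _; exact: sqr_ge0.
    by move=> /allP /(_ i (mem_index_enum _)) /implyP /(_ isT); rewrite sqrf_eq0 => /eqP.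
  have -> : P = 0 by rewrite /P big1 // => i _; rewrite b0 mulr0.
  by rewrite Be0 mulr0 expr0n.
have Bp : 0 < B by rewrite lt_def Bgt0 B0.
have key : 0 <= \sum_i (a i * B - b i * P) ^+ 2 by apply: sumr_ge0 => i _; exact: sqr_ge0.
have E : \sum_i (a i * B - b i * P) ^+ 2 = B * (A * B - P ^+ 2).
  transitivity (\sum_i (a i ^+ 2 * B ^+ 2 - (a i * b i) * (2 * B * P) + b i ^+ 2 * P ^+ 2)).
    by apply: eq_bigr => i _; ring.
  rewrite big_split /= sumrB -!mulr_suml -/A -/B -/P; ring.
rewrite E in key.
have : 0 <= A * B - P ^+ 2 by rewrite -(pmulr_rge0 _ Bp).
by rewrite subr_ge0 mulrC.
Qed.

Lemma cs_sqrt (I : finType) (a b : I -> R) :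
  \sum_i a i * b i <= Num.sqrt (\sum_i a i ^+ 2) * Num.sqrt (\sum_i b i ^+ 2).
Proof.
have A0 : 0 <= \sum_i a i ^+ 2 by apply: sumr_ge0 => i _; exact: sqr_ge0.
have [P0|P0] := lerP (\sum_i a i * b i) 0.
  apply: le_trans P0 _; by rewrite mulr_ge0 ?sqrtr_ge0.
rewrite -sqrtrM //.
rewrite -(ger0_norm (ltW P0)) -sqrtr_sqr; apply: ler_wsqrtr; exact: cs_real.
Qed.

End CS.

Lemma sin_le_id (R : realType) (x : R) : 0 <= x -> sin x <= x.
Proof.
move=> x0.
have [x1|z _ h] := @MVT_segment _ sin cos _ _ x0.
  exact/continuous_subspaceT/continuous_sin.
move: h; rewrite sin0 !subr0 => ->.
by rewrite ler_piMl // cos_le1.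
Qed.

Section Vec.
Variable R : realType.
Variable n : nat.
Local Notation C := (R[i]).
Local Notation V := ('cV[C]_n).
Implicit Types (v w x y : V) (z c : C).

Lemma innerDr v w1 w2 : inner v (w1 + w2) = inner v w1 + inner v w2.
Proof. by rewrite /inner -big_split; apply: eq_bigr => i _; rewrite mxE mulrDr. Qed.

Lemma innerZr v c w : inner v (c *: w) = c * inner v w.
Proof. by rewrite /inner mulr_sumr; apply: eq_bigr => i _; rewrite mxE mulrCA. Qed.

Lemma innerNr v w : inner v (- w) = - inner v w.
Proof. by rewrite /inner -sumrN; apply: eq_bigr => i _; rewrite mxE mulrN. Qed.

Lemma innerBr v w1 w2 : inner v (w1 - w2) = inner v w1 - inner v w2.
Proof. by rewrite innerDr innerNr. Qed.

Lemma innerDl v1 v2 w : inner (v1 + v2) w = inner v1 w + inner v2 w.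
Proof. by rewrite /inner -big_split; apply: eq_bigr => i _; rewrite mxE rmorphD mulrDl. Qed.

Lemma innerZl c v w : inner (c *: v) w = conjc c * inner v w.
Proof. by rewrite /inner mulr_sumr; apply: eq_bigr => i _; rewrite mxE rmorphM mulrA. Qed.

Lemma innerC v w : inner w v = conjc (inner v w).
Proof.
rewrite /inner rmorph_sum; apply: eq_bigr => i _.
by rewrite rmorphM /= conjcK mulrC.
Qed.

Lemma inner0r v : inner v 0 = 0.
Proof. by rewrite /inner big1 // => i _; rewrite mxE mulr0. Qed.

Lemma inner0l v : inner 0 v = 0.
Proof. by rewrite /inner big1 // => i _; rewrite mxE conjc0 mul0r. Qed.

Lemma vnorm_ge0 v : 0 <= vnorm v.
Proof. exact: sqrtr_ge0. Qed.

Lemma vnorm_sq v : vnorm v ^+ 2 = \sum_i absC (v i 0) ^+ 2.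
Proof. by rewrite /vnorm sqr_sqrtr // sumr_ge0 // => i _; rewrite sqr_ge0. Qed.

Lemma inner_self v : inner v v = ((vnorm v ^+ 2)%:C)%C.
Proof.
rewrite vnorm_sq rmorph_sum; apply: eq_bigr => i _.
by rewrite mulrC; exact: (esym (absC_sq _)).
Qed.

Lemma vnorm0 : vnorm (0 : V) = 0.
Proof.
by rewrite /vnorm big1 ?sqrtr0 // => i _; rewrite mxE absC0 expr0n.
Qed.

Lemma vnorm_eq0 v : vnorm v = 0 -> v = 0.
Proof.
move=> /eqP; rewrite sqrtr_eq0 => h.
have h0 : \sum_i absC (v i 0) ^+ 2 = 0.
  by apply/eqP; rewrite eq_le h sumr_ge0 // => i _; rewrite sqr_ge0.
apply/matrixP => i j; rewrite (ord1 j) mxE.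
move/eqP: h0; rewrite psumr_eq0; last by move=> k _; rewrite sqr_ge0.
move=> /allP /(_ i (mem_index_enum _)) /implyP /(_ isT).
by rewrite sqrf_eq0 => /eqP /absC_eq0.
Qed.

Lemma vnormZ c v : vnorm (c *: v) = absC c * vnorm v.
Proof.
rewrite /vnorm.
have -> : \sum_i absC ((c *: v) i 0) ^+ 2 = absC c ^+ 2 * \sum_i absC (v i 0) ^+ 2.
  by rewrite mulr_sumr; apply: eq_bigr => i _; rewrite mxE absCM exprMn.
by rewrite sqrtrM ?sqr_ge0 // sqrtr_sqr ger0_norm ?absC_ge0.
Qed.

Lemma vnormN v : vnorm (- v) = vnorm v.
Proof. by rewrite -scaleN1r vnormZ absCN (_ : 1 = (1 : R)%:C%C) // absC_real normr1 mul1r. Qed.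

Lemma cs_inner v w : absC (inner v w) <= vnorm v * vnorm w.
Proof.
rewrite /inner; apply: le_trans (absC_sum _) _.
under eq_bigr => i _ do rewrite absCM absCJ.
exact: cs_sqrt.
Qed.

Lemma vnormD v w : vnorm (v + w) <= vnorm v + vnorm w.
Proof.
have h : \sum_i absC ((v + w) i 0) ^+ 2 <= (vnorm v + vnorm w) ^+ 2.
  apply: le_trans (_ : \sum_i (absC (v i 0) + absC (w i 0)) ^+ 2 <= _).
    apply: ler_sum => i _; rewrite mxE; apply: lerXn2r; rewrite ?nnegrE ?absC_ge0 ?addr_ge0 ?absC_ge0 //.
    exact: absCD.
  have e : \sum_i (absC (v i 0) + absC (w i 0)) ^+ 2 =
     vnorm v ^+ 2 + 2 * \sum_i absC (v i 0) * absC (w i 0) + vnorm w ^+ 2.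
    rewrite !vnorm_sq mulr_sumr -!big_split /=; apply: eq_bigr => i _; ring.
  rewrite e; have := cs_sqrt (fun i => absC (v i 0)) (fun i => absC (w i 0)).
  rewrite /= -/(vnorm v) -/(vnorm w) => hc.
  have : 0 <= vnorm v * vnorm w by rewrite mulr_ge0 ?vnorm_ge0.
  nra.
rewrite /vnorm; apply: le_trans (ler_wsqrtr h) _.
by rewrite sqrtr_sqr ger0_norm // addr_ge0 // sqrtr_ge0.
Qed.

Lemma vnormB v w : vnorm (v - w) <= vnorm v + vnorm w.
Proof. by rewrite -(vnormN w) vnormD. Qed.

Lemma frob_ge0 (M : 'M[C]_n) : 0 <= frob M.
Proof. exact: sqrtr_ge0. Qed.

Lemma vnorm_mulmx (M : 'M[C]_n) v : vnorm (M *m v) <= frob M * vnorm v.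
Proof.
have hi : forall i, absC ((M *m v) i 0) ^+ 2 <= (\sum_j absC (M i j) ^+ 2) * vnorm v ^+ 2.
  move=> i; rewrite mxE.
  have h1 : absC (\sum_j M i j * v j 0) <= \sum_j absC (M i j) * absC (v j 0).
    by apply: le_trans (absC_sum _) _; apply: ler_sum => j _; rewrite absCM.
  have h2 := cs_sqrt (fun j => absC (M i j)) (fun j => absC (v j 0)).
  have h3 := le_trans h1 h2.
  have := lerXn2r 2 (absC_ge0 _) (mulr_ge0 (sqrtr_ge0 _) (sqrtr_ge0 _)) h3.
  rewrite exprMn sqr_sqrtr; last by apply: sumr_ge0 => j _; rewrite sqr_ge0.
  by rewrite -/(vnorm v).
have h : \sum_i absC ((M *m v) i 0) ^+ 2 <= (frob M * vnorm v) ^+ 2.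
  apply: le_trans (ler_sum _ (fun i _ => hi i)) _.
  rewrite -mulr_suml exprMn /frob (@sqr_sqrtr _ (\sum_i \sum_j absC (M i j) ^+ 2)) //.
  by apply: sumr_ge0 => i _; apply: sumr_ge0 => j _; rewrite sqr_ge0.
rewrite /vnorm; apply: le_trans (ler_wsqrtr h) _.
by rewrite sqrtr_sqr ger0_norm // mulr_ge0 ?frob_ge0 ?vnorm_ge0.
Qed.

Lemma frob_eq0 (M : 'M[C]_n) : frob M = 0 -> M = 0.
Proof.
move=> /eqP; rewrite sqrtr_eq0 => h.
have h0 : \sum_i \sum_j absC (M i j) ^+ 2 = 0.
  by apply/eqP; rewrite eq_le h /=; apply: sumr_ge0 => i _; apply: sumr_ge0 => j _; rewrite sqr_ge0.
apply/matrixP => i j; rewrite mxE.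
move/eqP: h0; rewrite psumr_eq0; last by move=> k _; apply: sumr_ge0 => l _; rewrite sqr_ge0.
move=> /allP /(_ i (mem_index_enum _)) /implyP /(_ isT).
rewrite psumr_eq0; last by move=> l _; rewrite sqr_ge0.
move=> /allP /(_ j (mem_index_enum _)) /implyP /(_ isT).
by rewrite sqrf_eq0 => /eqP /absC_eq0.
Qed.

End Vec.

Lemma le_sq (R : numDomainType) (x y : R) : 0 <= x -> 0 <= y -> x ^+ 2 <= y ^+ 2 -> x <= y.
Proof. by move=> x0 y0; rewrite (ler_pXn2r (n:=2)) ?nnegrE. Qed.

Lemma eq_sq (R : numDomainType) (x y : R) : 0 <= x -> 0 <= y -> x ^+ 2 = y ^+ 2 -> x = y.
Proof. by move=> x0 y0 /eqP; rewrite eqrXn2 // => /eqP. Qed.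

Section Proj.
Variable R : realType.
Variable n : nat.
Local Notation C := (R[i]).
Local Notation V := ('cV[C]_n).
Implicit Types (v w x y : V) (z c : C).

Lemma innerNl v w : inner (- v) w = - inner v w.
Proof. by rewrite /inner -sumrN; apply: eq_bigr => i _; rewrite mxE rmorphN mulNr. Qed.

Lemma innerBl v1 v2 w : inner (v1 - v2) w = inner v1 w - inner v2 w.
Proof. by rewrite innerDl innerNl. Qed.

Lemma vnorm_gt0 v : v != 0 -> 0 < vnorm v.
Proof.
move=> v0; rewrite lt_def vnorm_ge0 andbT; apply/eqP => /vnorm_eq0 h.
by rewrite h eqxx in v0.
Qed.

Lemma absC_inner_self v : absC (inner v v) = vnorm v ^+ 2.
Proof. by rewrite inner_self absC_real ger0_norm // sqr_ge0. Qed.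

Lemma inner_vv_neq0 v : v != 0 -> inner v v != 0.
Proof.
move=> v0; apply/eqP => h; have := absC_inner_self v; rewrite h absC0 => /esym/eqP.
by rewrite sqrf_eq0 => /eqP /vnorm_eq0 h'; rewrite h' eqxx in v0.
Qed.

Lemma inner_proj v y : v != 0 -> inner v (projperp v y) = 0.
Proof.
move=> v0; rewrite /projperp innerBr innerZr divfK ?subrr //.
exact: inner_vv_neq0.
Qed.

Lemma projD v y1 y2 : projperp v (y1 + y2) = projperp v y1 + projperp v y2.
Proof.
by rewrite /projperp innerDr mulrDl scalerDl opprD addrACA.
Qed.

Lemma projZ v c y : projperp v (c *: y) = c *: projperp v y.
Proof. by rewrite /projperp innerZr scalerBr scalerA mulrA. Qed.

Lemma projN v y : projperp v (- y) = - projperp v y.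
Proof. by rewrite -scaleN1r projZ scaleN1r. Qed.

Lemma projB v y1 y2 : projperp v (y1 - y2) = projperp v y1 - projperp v y2.
Proof. by rewrite projD projN. Qed.

Lemma proj_id v y : inner v y = 0 -> projperp v y = y.
Proof. by move=> h; rewrite /projperp h mul0r scale0r subr0. Qed.

Lemma proj_decomp v y : y = projperp v y + (inner v y / inner v v) *: v.
Proof. by rewrite /projperp subrK. Qed.

Lemma pythag x y : inner x y = 0 -> vnorm (x + y) ^+ 2 = vnorm x ^+ 2 + vnorm y ^+ 2.
Proof.
move=> h; apply: (@complexI R); rewrite rmorphD /= -!inner_self.
rewrite innerDl !innerDr h (innerC x y) h conjc0 !addr0 add0r; done.
Qed.

Lemma proj_norm v y : v != 0 ->
  vnorm (projperp v y) ^+ 2 + absC (inner v y) ^+ 2 / vnorm v ^+ 2 = vnorm y ^+ 2.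
Proof.
move=> v0.
have vp := vnorm_gt0 v0.
have -> : vnorm y ^+ 2 = vnorm (projperp v y + (inner v y / inner v v) *: v) ^+ 2.
  by rewrite -proj_decomp.
rewrite pythag; last first.
  by rewrite innerZr (innerC v (projperp v y)) inner_proj // conjc0 mulr0.
rewrite vnormZ absCM absCV absC_inner_self; congr (_ + _).
by field; rewrite gt_eqF.
Qed.

Lemma proj_le v y : v != 0 -> vnorm (projperp v y) <= vnorm y.
Proof.
move=> v0; apply: le_sq; rewrite ?vnorm_ge0 // -(proj_norm y v0) lerDl.
by rewrite divr_ge0 ?sqr_ge0.
Qed.

Definition cc v v' := absC (inner v v') / (vnorm v * vnorm v').
Definition ss v v' := Num.sqrt (1 - cc v v' ^+ 2).

Lemma cc_sym v v' : cc v v' = cc v' v.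
Proof. by rewrite /cc innerC absCJ [vnorm v * _]mulrC. Qed.

Lemma ss_sym v v' : ss v v' = ss v' v.
Proof. by rewrite /ss cc_sym. Qed.

Lemma cc_ge0 v v' : 0 <= cc v v'.
Proof. by rewrite /cc divr_ge0 ?absC_ge0 ?mulr_ge0 ?vnorm_ge0. Qed.

Lemma cc_le1 v v' : v != 0 -> v' != 0 -> cc v v' <= 1.
Proof.
move=> v0 v'0; rewrite /cc ler_pdivrMr ?mul1r ?cs_inner //.
by rewrite mulr_gt0 ?vnorm_gt0.
Qed.

Lemma ss_ge0 v v' : 0 <= ss v v'.
Proof. exact: sqrtr_ge0. Qed.

Lemma ss_sq v v' : v != 0 -> v' != 0 -> ss v v' ^+ 2 = 1 - cc v v' ^+ 2.
Proof.
move=> v0 v'0; rewrite /ss sqr_sqrtr // subr_ge0.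
have h1 := cc_le1 v0 v'0; have h0 := cc_ge0 v v'.
by rewrite expr_le1.
Qed.

Lemma ss_le1 v v' : v != 0 -> v' != 0 -> ss v v' <= 1.
Proof.
move=> v0 v'0; apply: le_sq; rewrite ?ss_ge0 // ss_sq // expr1n.
by rewrite lerBlDr lerDl sqr_ge0.
Qed.

Lemma norm_proj_other v v' : v != 0 -> v' != 0 ->
  vnorm (projperp v v') = ss v v' * vnorm v'.
Proof.
move=> v0 v'0; apply: eq_sq; rewrite ?mulr_ge0 ?ss_ge0 ?vnorm_ge0 //.
have := proj_norm v' v0; rewrite exprMn ss_sq // /cc.
have vp := vnorm_gt0 v0; have v'p := vnorm_gt0 v'0.
move=> h.
have -> : vnorm (projperp v v') ^+ 2 = vnorm v' ^+ 2 - absC (inner v v') ^+ 2 / vnorm v ^+ 2.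
  by rewrite -h addrK.
field; by rewrite !gt_eqF.
Qed.

Lemma orth_bound v v' w : v != 0 -> v' != 0 -> inner v w = 0 ->
  absC (inner v' w) <= ss v v' * vnorm v' * vnorm w.
Proof.
move=> v0 v'0 h.
have -> : inner v' w = inner (projperp v v') w.
  by rewrite /projperp innerBl innerZl h mulr0 subr0.
apply: le_trans (cs_inner _ _) _; by rewrite norm_proj_other.
Qed.

Lemma proj_lower v v' w : v != 0 -> v' != 0 -> inner v' w = 0 ->
  (1 - ss v v' ^+ 2) * vnorm w <= vnorm (projperp v w).
Proof.
move=> v0 v'0 h.
have hb := orth_bound v'0 v0 h.
rewrite ss_sym in hb.
have s0 := ss_ge0 v v'; have s1 := ss_le1 v0 v'0.
have hs0 : 0 <= 1 - ss v v' ^+ 2 by rewrite subr_ge0 expr_le1.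
apply: le_sq; rewrite ?mulr_ge0 ?vnorm_ge0 //.
have hn := proj_norm w v0.
have vp := vnorm_gt0 v0.
have h2 : absC (inner v w) ^+ 2 / vnorm v ^+ 2 <= ss v v' ^+ 2 * vnorm w ^+ 2.
  rewrite ler_pdivrMr ?exprn_gt0 //.
  have := lerXn2r 2 (absC_ge0 _) (mulr_ge0 (mulr_ge0 s0 (vnorm_ge0 v)) (vnorm_ge0 w)) hb.
  by rewrite !exprMn mulrAC.
have hw := vnorm_ge0 w.
have e : 0 <= ss v v' ^+ 2 by rewrite sqr_ge0.
have e1 : ss v v' ^+ 2 <= 1 by rewrite expr_le1.
rewrite exprMn.
have hW : 0 <= vnorm w ^+ 2 by rewrite sqr_ge0.
apply: le_trans (_ : (1 - ss v v' ^+ 2) * vnorm w ^+ 2 <= _).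
  apply: ler_wpM2r => //; rewrite expr2 ler_piMl //.
  by rewrite lerBlDr lerDl.
lra.
Qed.

Lemma ss_le_dP v v' : v != 0 -> v' != 0 -> ss v v' <= dP v' v.
Proof.
move=> v0 v'0; rewrite /dP -/(cc v' v) -cc_sym.
have h0 := cc_ge0 v v'; have h1 := cc_le1 v0 v'0.
have hc : -1 <= cc v v' <= 1 by rewrite h1 andbT (le_trans _ h0) // lerN10.
rewrite /ss -sin_acos //; apply: sin_le_id; exact: acos_ge0.
Qed.

Lemma dP_ge0 v v' : v != 0 -> v' != 0 -> 0 <= dP v' v.
Proof. move=> v0 v'0; exact: le_trans (ss_ge0 v v') (ss_le_dP v0 v'0). Qed.

End Proj.

Section Est.
Variable R : realType.
Variable n : nat.
Local Notation C := (R[i]).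
Local Notation V := ('cV[C]_n).
Implicit Types (v w x y : V) (z c lam : C) (A : 'M[C]_n).

Lemma AlvE A lam v w : Alv A lam v w = projperp v (A *m w - lam *: w).
Proof. by rewrite /Alv mulmxBl mul_scalar_mx. Qed.

Lemma AlvZ A lam v c w : Alv A lam v (c *: w) = c *: Alv A lam v w.
Proof. by rewrite !AlvE -projZ scalerBr scalerA mulrC -scalerA -scalemxAr. Qed.

Lemma AlvD A lam v w1 w2 : Alv A lam v (w1 + w2) = Alv A lam v w1 + Alv A lam v w2.
Proof.
rewrite !AlvE -projD mulmxDr scalerDr; congr projperp.
by rewrite opprD addrACA.
Qed.

Lemma AlvN A lam v w : Alv A lam v (- w) = - Alv A lam v w.
Proof. by rewrite -[- w]scaleN1r AlvZ scaleN1r. Qed.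

Lemma AlvB A lam v w1 w2 : Alv A lam v (w1 - w2) = Alv A lam v w1 - Alv A lam v w2.
Proof. by rewrite AlvD AlvN. Qed.

Lemma Alv0 A lam v : Alv A lam v 0 = 0.
Proof. by rewrite AlvE mulmx0 scaler0 subrr /projperp inner0r mul0r scale0r subrr. Qed.

Lemma Alv_projv A lam v w : A *m v = lam *: v ->
  Alv A lam v (projperp v w) = Alv A lam v w.
Proof.
move=> hv; rewrite {1}/projperp AlvB AlvZ.
by rewrite (AlvE A lam v v) hv subrr /projperp inner0r mul0r scale0r subrr scaler0 subr0.
Qed.

Lemma inner_Alv A lam v w : v != 0 -> inner v (Alv A lam v w) = 0.
Proof. by move=> v0; rewrite AlvE inner_proj. Qed.

Lemma opbound A lam w : vnorm (A *m w - lam *: w) <= (frob A + absC lam) * vnorm w.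
Proof.
apply: le_trans (vnormB _ _) _; rewrite vnormZ mulrDl lerD2r.
exact: vnorm_mulmx.
Qed.

Lemma lam_le1 A lam v : frob A = 1 -> A *m v = lam *: v -> v != 0 -> absC lam <= 1.
Proof.
move=> hA hv v0; have vp := vnorm_gt0 v0.
have := vnorm_mulmx A v; rewrite hv vnormZ hA.
by rewrite mul1r -{2}(mul1r (vnorm v)) ler_pM2r.
Qed.

Lemma absC_lam' lam lam' : absC lam' <= absC lam + absC (lam' - lam).
Proof. by rewrite -{1}(subrK lam lam') addrC absCD. Qed.

Lemma errbound A A' lam lam' w :
  vnorm ((A' - A) *m w - (lam' - lam) *: w) <= (frob (A' - A) + absC (lam' - lam)) * vnorm w.
Proof. exact: opbound. Qed.

Lemma err_decomp A A' lam lam' w :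
  A' *m w - lam' *: w = (A *m w - lam *: w) + ((A' - A) *m w - (lam' - lam) *: w).
Proof.
rewrite mulmxBl scalerBl; apply/matrixP => i j; rewrite !mxE; ring.
Qed.

Lemma proj_swap v1 v2 y : v1 != 0 -> v2 != 0 ->
  vnorm (projperp v2 y) <= vnorm (projperp v1 y) + ss v1 v2 * vnorm y.
Proof.
move=> v10 v20.
have -> : projperp v2 y = projperp v2 (projperp v1 y) + (inner v1 y / inner v1 v1) *: projperp v2 v1.
  by rewrite -projZ -projD -proj_decomp.
apply: le_trans (vnormD _ _) _; apply: lerD; first exact: proj_le.
rewrite vnormZ norm_proj_other // absCM absCV absC_inner_self ss_sym.
have vp := vnorm_gt0 v10; have := cs_inner v1 y.
have s0 := ss_ge0 v1 v2; have y0 := vnorm_ge0 y.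
set a := absC _; set N := vnorm v1 => ha.
have -> : a * (N ^+ 2)^-1 * (ss v1 v2 * N) = ss v1 v2 * (a / N).
  by field; rewrite gt_eqF.
apply: ler_wpM2l => //; rewrite ler_pdivrMr //.
by rewrite mulrC.
Qed.

End Est.

Section Est2.
Variable R : realType.
Variable n : nat.
Local Notation C := (R[i]).
Local Notation V := ('cV[C]_n).
Implicit Types (v w x y : V) (z c lam : C) (A : 'M[C]_n).

Lemma est1 A A' lam lam' v v' w :
  frob A = 1 -> frob A' = 1 -> A *m v = lam *: v -> v != 0 -> v' != 0 ->
  inner v' w = 0 ->
  vnorm (Alv A lam v w) <= vnorm (Alv A' lam' v' w)
     + (frob (A' - A) + absC (lam' - lam) + ss v v' * (2 + absC (lam' - lam))) * vnorm w.
Proof.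
move=> hA hA' hv v0 v'0 hw.
have hl := lam_le1 hA hv v0.
have hl' := absC_lam' lam lam'.
set a := frob (A' - A); set b := absC (lam' - lam) in hl' *; set s := ss v v'.
set z := A' *m w - lam' *: w; set e := (A' - A) *m w - (lam' - lam) *: w.
have w0 := vnorm_ge0 w; have s0 : 0 <= s := ss_ge0 v v'.
have hz : vnorm z <= (2 + b) * vnorm w.
  apply: le_trans (opbound _ _ _) _; rewrite hA'; apply: ler_wpM2r => //.
  rewrite -/b; lra.
have he : vnorm e <= (a + b) * vnorm w by exact: errbound.
have ee : A *m w - lam *: w = z - e by rewrite /z (err_decomp A A' lam lam') addrK.
rewrite AlvE ee projB.
apply: le_trans (vnormB _ _) _.
have h1 := proj_swap z v'0 v0; rewrite ss_sym -/s in h1.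
have h2 : vnorm (projperp v e) <= vnorm e by exact: proj_le.
have h3 : s * vnorm z <= s * ((2 + b) * vnorm w) by exact: ler_wpM2l.
rewrite (AlvE A') -/z.
apply: le_trans (lerD h1 (le_trans h2 he)) _.
rewrite -addrA lerD2l.
apply: le_trans (lerD h3 (lexx _)) _.
have -> : (a + b + s * (2 + b)) * vnorm w = s * ((2 + b) * vnorm w) + (a + b) * vnorm w by ring.
done.
Qed.

Lemma est2 A A' lam lam' v v' w :
  frob A = 1 -> frob A' = 1 -> A *m v = lam *: v -> v != 0 -> v' != 0 ->
  inner v w = 0 ->
  vnorm (Alv A' lam' v' (projperp v' w)) <= vnorm (Alv A lam v w)
     + (frob (A' - A) + absC (lam' - lam) + 2 * ss v v'
        + ss v v' * (ss v v' * (2 + absC (lam' - lam)) + frob (A' - A) + absC (lam' - lam)))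
       * vnorm w.
Proof.
move=> hA hA' hv v0 v'0 hw.
have hl := lam_le1 hA hv v0.
have hl' := absC_lam' lam lam'.
set a := frob (A' - A); set b := absC (lam' - lam) in hl' *; set s := ss v v'.
have w0 := vnorm_ge0 w; have s0 : 0 <= s := ss_ge0 v v'.
have a0 : 0 <= a := frob_ge0 _; have b0 : 0 <= b := absC_ge0 _.
have vp := vnorm_gt0 v0; have v'p := vnorm_gt0 v'0.
set beta := inner v' w / inner v' v'.
rewrite {1}/projperp -/beta AlvB AlvZ.
apply: le_trans (vnormB _ _) _; rewrite vnormZ.
have H1 : vnorm (Alv A' lam' v' w) <= vnorm (Alv A lam v w) + (2 * s + (a + b)) * vnorm w.
  rewrite (AlvE A') (err_decomp A A' lam lam') projD.
  apply: le_trans (vnormD _ _) _.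
  have h1 := proj_swap (A *m w - lam *: w) v0 v'0; rewrite -/s -(AlvE A lam v w) in h1.
  have hy : vnorm (A *m w - lam *: w) <= 2 * vnorm w.
    apply: le_trans (opbound _ _ _) _; rewrite hA; apply: ler_wpM2r => //; lra.
  have h3 : s * vnorm (A *m w - lam *: w) <= s * (2 * vnorm w) by exact: ler_wpM2l.
  have h2 := proj_le ((A' - A) *m w - (lam' - lam) *: w) v'0.
  have he := errbound A A' lam lam' w; rewrite -/a -/b in he.
  apply: le_trans (lerD h1 (le_trans h2 he)) _.
  rewrite -addrA lerD2l.
  apply: le_trans (lerD h3 (lexx _)) _.
  rewrite le_eqVlt; apply/orP; left; apply/eqP; ring.
have H2 : vnorm (Alv A' lam' v' v') <= (s * (2 + b) + a + b) * vnorm v'.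
  rewrite (AlvE A'); apply: le_trans (proj_le _ v'0) _.
  set gam := inner v v' / inner v v.
  have -> : A' *m v' - lam' *: v' =
      (A' *m projperp v v' - lam' *: projperp v v') + gam *: (A' *m v - lam' *: v).
    have Llin : forall (x y : V) c, A' *m (x + c *: y) - lam' *: (x + c *: y) =
        (A' *m x - lam' *: x) + c *: (A' *m y - lam' *: y).
      move=> x y c; rewrite mulmxDr scalerDr -scalemxAr scalerBr scalerA [lam' * c]mulrC.
      by rewrite -scalerA opprD addrACA.
    by rewrite -Llin /gam -proj_decomp.
  apply: le_trans (vnormD _ _) _; rewrite vnormZ.
  have hx : vnorm (A' *m projperp v v' - lam' *: projperp v v') <= (2 + b) * (s * vnorm v').
    rewrite -norm_proj_other //; apply: le_trans (opbound _ _ _) _; rewrite hA'.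
    by apply: ler_wpM2r; rewrite ?vnorm_ge0 //; lra.
  have hev : A' *m v - lam' *: v = (A' - A) *m v - (lam' - lam) *: v.
    by rewrite (err_decomp A A' lam lam') hv subrr add0r.
  rewrite hev.
  have he := errbound A A' lam lam' v; rewrite -/a -/b in he.
  have hg : absC gam * vnorm v <= vnorm v'.
    rewrite /gam absCM absCV absC_inner_self.
    have := cs_inner v v'.
    set p := absC _ => hp.
    have -> : p * (vnorm v ^+ 2)^-1 * vnorm v = p / vnorm v by field; rewrite gt_eqF.
    by rewrite ler_pdivrMr // mulrC.
  have g0 : 0 <= absC gam := absC_ge0 _.
  have hge : absC gam * vnorm ((A' - A) *m v - (lam' - lam) *: v) <= absC gam * ((a + b) * vnorm v).
    exact: ler_wpM2l.
  have hab : absC gam * ((a + b) * vnorm v) <= (a + b) * vnorm v'.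
    rewrite mulrCA; apply: ler_wpM2l => //; by rewrite addr_ge0.
  apply: le_trans (lerD hx (le_trans hge hab)) _.
  rewrite le_eqVlt; apply/orP; left; apply/eqP; ring.
have H3 : absC beta * vnorm v' <= s * vnorm w.
  rewrite /beta absCM absCV absC_inner_self.
  have := orth_bound v0 v'0 hw; rewrite -/s.
  set p := absC _ => hp.
  have -> : p * (vnorm v' ^+ 2)^-1 * vnorm v' = p / vnorm v' by field; rewrite gt_eqF.
  by rewrite ler_pdivrMr // mulrAC.
have bt0 : 0 <= absC beta := absC_ge0 _.
have K0 : 0 <= s * (2 + b) + a + b by rewrite !addr_ge0 // mulr_ge0 // addr_ge0.
have H4 : absC beta * vnorm (Alv A' lam' v' v') <= absC beta * ((s * (2 + b) + a + b) * vnorm v').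
  exact: ler_wpM2l.
have H5 : absC beta * ((s * (2 + b) + a + b) * vnorm v') <= (s * vnorm w) * (s * (2 + b) + a + b).
  rewrite mulrCA mulrC; apply: ler_wpM2r => //.
apply: le_trans (lerD H1 (le_trans H4 H5)) _.
rewrite -addrA lerD2l.
rewrite le_eqVlt; apply/orP; left; apply/eqP; ring.
Qed.

End Est2.

Section Surj.
Variable R : realType.
Variable n : nat.
Local Notation C := (R[i]).
Local Notation V := ('cV[C]_n).
Implicit Types (v w x y : V) (z c lam : C) (A : 'M[C]_n).

Definition vstar v : 'rV[C]_n := (map_mx conjc v)^T.

Lemma inner_mx v w : inner v w = (vstar v *m w) 0 0.
Proof. by rewrite /inner !mxE; apply: eq_bigr => i _; rewrite !mxE. Qed.

Lemma vmul11 v w : v *m (vstar v *m w) = inner v w *: v.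
Proof. by rewrite [vstar v *m w]mx11_scalar mul_mx_scalar -inner_mx. Qed.

Definition Pmx v : 'M[C]_n := 1%:M - (inner v v)^-1 *: (v *m vstar v).

Lemma proj_mx v w : projperp v w = Pmx v *m w.
Proof.
rewrite /Pmx mulmxBl mul1mx -scalemxAl -mulmxA vmul11 scalerA /projperp.
by rewrite mulrC.
Qed.

Definition Nmx A lam v : 'M[C]_n :=
  Pmx v *m (A - lam%:M) *m Pmx v + (inner v v)^-1 *: (v *m vstar v).

Lemma Nmx_mul A lam v w : Nmx A lam v *m w =
  Alv A lam v (projperp v w) + (inner v w / inner v v) *: v.
Proof.
rewrite /Nmx mulmxDl -!mulmxA /Alv !proj_mx.
by rewrite -scalemxAl -mulmxA vmul11 scalerA mulrC.
Qed.

Lemma inner_Nmx A lam v w : v != 0 -> inner v (Nmx A lam v *m w) = inner v w.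
Proof.
move=> v0; rewrite Nmx_mul innerDr inner_Alv // add0r innerZr.
by rewrite divfK // inner_vv_neq0.
Qed.

Lemma Alv_surj A lam v : v != 0 ->
  (forall w, inT v w -> Alv A lam v w = 0 -> w = 0) ->
  forall y, inT v y -> exists2 w, inT v w & Alv A lam v w = y.
Proof.
move=> v0 inj.
have Ninj : forall w, Nmx A lam v *m w = 0 -> w = 0.
  move=> w hw.
  have iw : inner v w = 0 by rewrite -(inner_Nmx A lam w v0) hw inner0r.
  apply: inj => //.
  by move: hw; rewrite Nmx_mul proj_id // iw mul0r scale0r addr0.
have Nu : Nmx A lam v \in unitmx.
  rewrite unitmxE unitfE -det_tr; apply/negP => /det0P [r r0 hr].
  have : Nmx A lam v *m r^T = 0 by rewrite -[Nmx A lam v]trmxK -trmx_mul hr trmx0.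
  move=> /Ninj h; move: r0; by rewrite -[r]trmxK h trmx0 eqxx.
move=> y hy; exists (invmx (Nmx A lam v) *m y).
  by rewrite /inT -(inner_Nmx A lam _ v0) mulKVmx.
have := mulKVmx Nu y; rewrite Nmx_mul.
have iw : inner v (invmx (Nmx A lam v) *m y) = 0.
  by rewrite -(inner_Nmx A lam _ v0) mulKVmx.
by rewrite proj_id // iw mul0r scale0r addr0.
Qed.

End Surj.

Section Sup.
Variable R : realType.
Variable n : nat.
Local Notation C := (R[i]).
Local Notation V := ('cV[C]_n).
Implicit Types (v w x y : V) (z c lam : C) (A : 'M[C]_n).

Lemma opnorm_ge0 A lam v : (0 <= Alv_inv_opnorm A lam v)%E.
Proof.
rewrite /Alv_inv_opnorm; apply: ereal_sup_ubound.
exists 0; last by rewrite vnorm0.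
split; first by rewrite /inT inner0r.
by exists 0; rewrite /inT inner0r vnorm0 Alv0 ler01.
Qed.

Lemma opnorm_le A lam v K : 0 <= K ->
  (forall w, inT v w -> vnorm w <= K * vnorm (Alv A lam v w)) ->
  (Alv_inv_opnorm A lam v <= K%:E)%E.
Proof.
move=> K0 hK; apply: ge_ereal_sup => x [w [hw [y [hy hy1 hwy]]] <-].
rewrite lee_fin; apply: le_trans (hK w hw) _; rewrite hwy.
by rewrite -{2}(mulr1 K) ler_wpM2l.
Qed.

Lemma opnorm_bound A lam v M : v != 0 -> Alv_invertible A lam v ->
  Alv_inv_opnorm A lam v = M%:E ->
  forall w, inT v w -> vnorm w <= M * vnorm (Alv A lam v w).
Proof.
move=> v0 [inj _] hM w hw.
have [h0|h0] := eqVneq (Alv A lam v w) 0.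
  by rewrite (inj w hw h0) vnorm0 Alv0 vnorm0 mulr0.
have tp : 0 < vnorm (Alv A lam v w).
  rewrite lt_def vnorm_ge0 andbT; apply/eqP => /vnorm_eq0 h; by rewrite h eqxx in h0.
set t := vnorm (Alv A lam v w) in tp *.
set w1 := ((t^-1)%:C)%C *: w.
have hw1 : inT v w1 by rewrite /inT /w1 innerZr hw mulr0.
have ht : vnorm (Alv A lam v w1) = 1.
  rewrite /w1 AlvZ vnormZ absC_real ger0_norm; last by rewrite invr_ge0 ltW.
  by rewrite mulVf // gt_eqF.
have : ((vnorm w1)%:E <= M%:E)%E.
  rewrite -hM /Alv_inv_opnorm; apply: ereal_sup_ubound.
  exists w1 => //; split => //; exists (Alv A lam v w1); split => //.
    exact: inner_Alv.
  by rewrite ht.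
rewrite lee_fin /w1 vnormZ absC_real ger0_norm; last by rewrite invr_ge0 ltW.
by rewrite mulrC ler_pdivrMr.
Qed.

Lemma mu_triv A lam v : (forall w, inT v w -> w = 0) -> mu A lam v = 0%E.
Proof.
move=> triv.
have inv : Alv_invertible A lam v.
  split; first by move=> w hw _; exact: triv.
  by move=> y hy; exists 0; rewrite ?(triv y hy) ?Alv0 // /inT inner0r.
have h0 : Alv_inv_opnorm A lam v = 0%E.
  apply/eqP; rewrite eq_le opnorm_ge0 andbT.
  apply: (opnorm_le (K := 0)) => // w hw.
  by rewrite (triv w hw) vnorm0 mul0r.
by rewrite /mu asboolT // h0 mule0.
Qed.

Lemma triv_transfer v v' : v != 0 -> v' != 0 ->
  (forall w, inT v w -> w = 0) -> (forall w, inT v' w -> w = 0).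
Proof.
move=> v0 v'0 triv w hw.
have pw : projperp v w = 0 by apply: triv; rewrite /inT inner_proj.
have pv : projperp v v' = 0 by apply: triv; rewrite /inT inner_proj.
have ew : w = (inner v w / inner v v) *: v by rewrite {1}(proj_decomp v w) pw add0r.
have ev : v' = (inner v v' / inner v v) *: v by rewrite {1}(proj_decomp v v') pv add0r.
have ga0 : inner v v' / inner v v != 0.
  by apply: contra v'0 => /eqP h; rewrite ev h scale0r.
have e : inner v' w = conjc (inner v v' / inner v v) * ((inner v w / inner v v) * inner v v).
  by rewrite {1}ev {1}ew innerZl innerZr.
move: hw; rewrite /inT e => /eqP.
rewrite !mulf_eq0 conjc_eq0 (negbTE ga0) invr_eq0 (negbTE (inner_vv_neq0 v0)) /= !orbF.
by move=> /eqP h; rewrite ew h mul0r scale0r.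
Qed.

Lemma inT_scale v g w : g != 0 -> inT (g *: v) w <-> inT v w.
Proof.
move=> g0; rewrite /inT innerZl; split; last by move=> ->; rewrite mulr0.
by move=> /eqP; rewrite mulf_eq0 conjc_eq0 (negbTE g0) /= => /eqP.
Qed.

Lemma proj_scale v g y : g != 0 -> v != 0 -> projperp (g *: v) y = projperp v y.
Proof.
move=> g0 v0; rewrite /projperp !innerZl !innerZr scalerA; congr (_ - _ *: _).
have := inner_vv_neq0 v0; have : conjc g != 0 by rewrite conjc_eq0.
move=> h1 h2; field; by rewrite h1 h2 g0.
Qed.

Lemma mu_scale A lam v g : g != 0 -> v != 0 -> mu A lam (g *: v) = mu A lam v.
Proof.
move=> g0 v0.
have e1 : inT (g *: v) = inT v.
  by apply: funext => w; apply: propext; exact: inT_scale.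
have e2 : Alv A lam (g *: v) = Alv A lam v.
  by apply: funext => w; rewrite /Alv proj_scale.
by rewrite /mu /Alv_inv_opnorm /Alv_invertible e1 e2.
Qed.

End Sup.

Section Num.
Variable R : realFieldType.

Lemma num_common (e M a b s th : R) : 0 < e -> e <= 37/100 -> 1 <= 2 * M ->
  0 <= a -> 0 <= b -> 0 <= s -> s <= th -> M * (a + b + th) <= e / (72/10) ->
  [/\ 0 < M, a + b + th <= 2 * (M * (a + b + th)), a + b + th <= 1/9,
      s ^+ 2 <= (2/9) * (M * (a + b + th)) &
      M * (a + b + s * (2 + b)) <= (19/9) * (M * (a + b + th))].
Proof.
move=> e0 e1 hM a0 b0 s0 sth hx.
set S := a + b + th in hx *; set x := M * S in hx *.
have M0 : 0 < M by lra.
have S0 : 0 <= S by rewrite /S; lra.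
have hS : S <= 2 * x.
  have := ler_wpM2r S0 hM; rewrite mul1r /x mulrA //.
have hS9 : S <= 1/9 by lra.
have hsS : s <= S by rewrite /S; lra.
have hbS : b <= S by rewrite /S; lra.
split => //.
- have h1 : s * s <= S * S by apply: ler_pM.
  have h2 : S * S <= (1/9) * (2 * x) by apply: ler_pM.
  rewrite expr2; lra.
- have h1 : s * (2 + b) <= th * (2 + 1/9) by apply: ler_pM => //; lra.
  have h2 : a + b + s * (2 + b) <= (19/9) * S by rewrite /S; lra.
  have := ler_wpM2l (ltW M0) h2; rewrite /x; lra.
Qed.

Lemma num1 (e M a b s th : R) : 0 < e -> e <= 37/100 -> 1 <= 2 * M ->
  0 <= a -> 0 <= b -> 0 <= s -> s <= th -> M * (a + b + th) <= e / (72/10) ->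
  0 < 1 - s ^+ 2 - M * (a + b + s * (2 + b)) /\
  1 <= (1 + e) * (1 - s ^+ 2 - M * (a + b + s * (2 + b))).
Proof.
move=> e0 e1 hM a0 b0 s0 sth hx.
have [M0 _ _ h1 h2] := num_common e0 e1 hM a0 b0 s0 sth hx.
move: h1 h2 hx; set x := M * (a + b + th); set D := 1 - _ - _ => h1 h2 hx.
have hD : 1 - (7/3) * x <= D by rewrite /D; lra.
split; first by lra.
have e0' : 0 <= 1 + e by lra.
apply: le_trans (ler_wpM2l e0' hD).
have : (1 + e) * x <= (1 + e) * (e / (72/10)) by apply: ler_wpM2l.
have : 0 <= e * (37/100 - e) by apply: mulr_ge0; lra.
lra.
Qed.

Lemma num2 (e M M' a b s th : R) : 0 < e -> e <= 37/100 -> 1 <= 2 * M ->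
  0 <= a -> 0 <= b -> 0 <= s -> s <= th -> M * (a + b + th) <= e / (72/10) ->
  0 <= M' -> M' <= (1 + e) * M ->
  0 < 1 - s ^+ 2 - M' * (a + b + 2 * s + s * (s * (2 + b) + a + b)) /\
  1 <= (1 + e) * (1 - s ^+ 2 - M' * (a + b + 2 * s + s * (s * (2 + b) + a + b))).
Proof.
move=> e0 e1 hM a0 b0 s0 sth hx M'0 hM'.
have [M0 hS hS9 h1 _] := num_common e0 e1 hM a0 b0 s0 sth hx.
move: hS hS9 h1 hx; set S := a + b + th; set x := M * S => hS hS9 h1 hx.
set d := a + b + 2 * s + s * (s * (2 + b) + a + b).
have hsS : s <= S by rewrite /S; lra.
have hbS : b <= S by rewrite /S; lra.
have hin : s * (2 + b) + a + b <= 19/81.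
  have : s * (2 + b) <= s * (2 + 1/9) by apply: ler_wpM2l => //; lra.
  have : s + a + b <= S by rewrite /S; lra.
  lra.
have hd0 : 0 <= d by rewrite /d; apply: addr_ge0; [lra | apply: mulr_ge0 => //; apply: addr_ge0; [|lra]; apply: addr_ge0; [apply: mulr_ge0; lra|lra]].
have hd : d <= (181/81) * S.
  have : s * (s * (2 + b) + a + b) <= th * (19/81).
    apply: ler_pM => //; apply: addr_ge0; [|lra]; apply: addr_ge0; [apply: mulr_ge0; lra|lra].
  rewrite /d /S; lra.
have hMd : M' * d <= (1 + e) * ((181/81) * x).
  apply: le_trans (ler_wpM2r hd0 hM') _.
  rewrite -[(1 + e) * M * d]mulrA; apply: ler_wpM2l; first lra.
  have := ler_wpM2l (ltW M0) hd; rewrite /x; lra.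
set D := 1 - _ - _.
have hD : 1 - (2/9) * x - (1 + e) * ((181/81) * x) <= D by rewrite /D; lra.
have hxe : (1 + e) * x <= (1 + e) * (e / (72/10)) by apply: ler_wpM2l => //; lra.
have hxe2 : (1 + e) * ((1 + e) * x) <= (1 + e) * ((1 + e) * (e / (72/10))).
  by apply: ler_wpM2l => //; lra.
have hx0 : 0 <= x by rewrite /x; apply: mulr_ge0; lra.
have he2 : 0 <= e * (37/100 - e) by apply: mulr_ge0; lra.
have he3 : 0 <= e * (e * (37/100 - e)) by apply: mulr_ge0; lra.
split; first lra.
have e0' : 0 <= 1 + e by lra.
apply: le_trans (ler_wpM2l e0' hD).
lra.
Qed.

End Num.

Lemma comb (R : realFieldType) (p q M X d W : R) : p * W <= q -> q <= M * (X + d * W) ->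
  0 < p - M * d -> W <= (M / (p - M * d)) * X.
Proof.
move=> h1 h2 hp.
have : (p - M * d) * W <= M * X by lra.
by rewrite mulrAC ler_pdivlMr // mulrC.
Qed.

Lemma concl_eq (R : realType) (x : \bar R) (e : R) : (0 <= x)%E -> 0 < e ->
  ((((1 + e)^-1)%:E * x <= x)%E /\ (x <= (1 + e)%:E * x)%E).
Proof.
move=> x0 e0; have e1 : 0 < 1 + e by lra.
case: x x0 => [r| |] //= r0.
- rewrite -!EFinM !lee_fin; move: r0; rewrite lee_fin => r0; split.
    by rewrite ler_pdivrMl //; nra.
  nra.
- rewrite !(muleC _ +oo%E) !gt0_mulye ?lte_fin ?invr_gt0 //.
Qed.

Lemma mu_ge0 (R : realType) n (A : 'M[R[i]]_n) lam v : (0 <= mu A lam v)%E.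
Proof.
rewrite /mu; case: asboolP => // _.
by apply: mule_ge0; [rewrite lee_fin frob_ge0 | exact: opnorm_ge0].
Qed.

Lemma muE (R : realType) n (A : 'M[R[i]]_n) lam v : frob A = 1 -> Alv_invertible A lam v ->
  mu A lam v = Alv_inv_opnorm A lam v.
Proof. by move=> hA hi; rewrite /mu asboolT // hA mul1e. Qed.

Theorem proposition4p1 (R : realType) (n : nat) (A A' : 'M[R[i]]_n)
    (v v' : 'cV[R[i]]_n) (lam lam' : R[i]) (eps : R) :
  frob A = 1 -> frob A' = 1 ->
  v != 0 -> v' != 0 ->
  A *m v = lam *: v ->
  0 < eps -> eps <= 37 / 100 ->
  (mu A lam v * (frob (A' - A) + absC (lam' - lam) + dP v' v)%:E
     <= (eps / (72 / 10))%:E)%E ->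
  (((1 + eps)^-1)%:E * mu A lam v <= mu A' lam' v')%E /\
  (mu A' lam' v' <= (1 + eps)%:E * mu A lam v)%E.
Proof.
move=> hA hA' v0 v'0 hv e0 e1 hyp.
have a0 := frob_ge0 (A' - A); have b0 := absC_ge0 (lam' - lam).
have th0 := dP_ge0 v0 v'0.
have sth := ss_le_dP v0 v'0; have s0 := ss_ge0 v v'.
have mu0 := mu_ge0 A lam v.
have [S0|Sn0] := eqVneq (frob (A' - A) + absC (lam' - lam) + dP v' v) 0.
  have ha : frob (A' - A) = 0 by lra.
  have hb : absC (lam' - lam) = 0 by lra.
  have hth : dP v' v = 0 by lra.
  have eA : A' = A by apply/eqP; rewrite -subr_eq0; apply/eqP/frob_eq0.
  have el : lam' = lam by apply/eqP; rewrite -subr_eq0; apply/eqP/absC_eq0.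
  have es : ss v v' = 0 by lra.
  have pv : projperp v v' = 0.
    by apply: vnorm_eq0; rewrite norm_proj_other // es mul0r.
  have ev : v' = (inner v v' / inner v v) *: v by rewrite {1}(proj_decomp v v') pv add0r.
  have g0 : inner v v' / inner v v != 0.
    by apply: contra v'0 => /eqP h; rewrite ev h scale0r.
  rewrite eA el ev mu_scale //; exact: concl_eq.
set S := frob (A' - A) + absC (lam' - lam) + dP v' v in Sn0 hyp.
have Sp : 0 < S by rewrite lt_def Sn0 /S; lra.
have mufin : mu A lam v != +oo%E.
  by apply/eqP => hinf; move: hyp; rewrite hinf gt0_mulye ?lte_fin.
have invA : Alv_invertible A lam v.
  by apply: contrapT => hn; move: mufin; rewrite /mu asboolF // eqxx.
have mE := muE hA invA.
have op0 := opnorm_ge0 A lam v.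
case E : (Alv_inv_opnorm A lam v) op0 => [M| |] // op0; last first.
  by move: mufin; rewrite mE E eqxx.
rewrite lee_fin in op0.
rewrite mE E -EFinM lee_fin in hyp.
have Bnd := opnorm_bound v0 invA E.
have [triv|ntriv] := pselect (forall w, inT v w -> w = 0).
  rewrite (mu_triv A' lam' (triv_transfer v0 v'0 triv)) (mu_triv A lam triv) !mule0.
  by split.
have [w0 [hw0 nw0]] : exists w, inT v w /\ w <> 0.
  move/existsNP: ntriv => [w /not_implyP [hw hn]]; by exists w.
have hM : 1 <= 2 * M.
  have w0p : 0 < vnorm w0 by apply: vnorm_gt0; apply/eqP.
  have h1 := Bnd w0 hw0.
  have h2 : vnorm (Alv A lam v w0) <= 2 * vnorm w0.
    rewrite AlvE; apply: le_trans (proj_le _ v0) _.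
    apply: le_trans (opbound _ _ _) _; rewrite hA; apply: ler_wpM2r; first exact: vnorm_ge0.
    have := lam_le1 hA hv v0; lra.
  have h3 := ler_wpM2l op0 h2.
  have : vnorm w0 <= (2 * M) * vnorm w0 by lra.
  by rewrite -{1}(mul1r (vnorm w0)) ler_pM2r.
have [D1p D1e] := num1 e0 e1 hM a0 b0 s0 sth hyp.
set D1 := 1 - _ - _ in D1p D1e.
have Bnd1 : forall w', inT v' w' -> vnorm w' <= (M / D1) * vnorm (Alv A' lam' v' w').
  move=> w' hw'.
  have h1 := proj_lower v0 v'0 hw'.
  have h2 := Bnd (projperp v w') (inner_proj _ v0).
  rewrite Alv_projv // in h2.
  have h3 := est1 lam' hA hA' hv v0 v'0 hw'.
  have h4 := ler_wpM2l op0 h3.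
  exact: comb h1 (le_trans h2 h4) D1p.
have MD0 : 0 <= M / D1 by rewrite divr_ge0 // ltW.
have invA' : Alv_invertible A' lam' v'.
  have inj : forall w, inT v' w -> Alv A' lam' v' w = 0 -> w = 0.
    move=> w hw h0; apply: vnorm_eq0; apply/eqP; rewrite eq_le vnorm_ge0 andbT.
    by have := Bnd1 w hw; rewrite h0 vnorm0 mulr0.
  by split => //; exact: Alv_surj.
have mE' := muE hA' invA'.
have op0' := opnorm_ge0 A' lam' v'.
have opl := opnorm_le MD0 Bnd1.
case E' : (Alv_inv_opnorm A' lam' v') op0' opl => [M'| |] // op0' opl.
rewrite lee_fin in op0'; rewrite lee_fin in opl.
have hM' : M' <= (1 + eps) * M.
  apply: le_trans opl _; rewrite ler_pdivrMr // mulrAC.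
  by rewrite -{1}(mul1r M) ler_wpM2r.
have [D2p D2e] := num2 e0 e1 hM a0 b0 s0 sth hyp op0' hM'.
set D2 := 1 - _ - _ in D2p D2e.
have Bnd' := opnorm_bound v'0 invA' E'.
have Bnd2 : forall w, inT v w -> vnorm w <= (M' / D2) * vnorm (Alv A lam v w).
  move=> w hw.
  have h1 := proj_lower v'0 v0 hw; rewrite ss_sym in h1.
  have h2 := Bnd' (projperp v' w) (inner_proj _ v'0).
  have h3 := est2 lam' hA hA' hv v0 v'0 hw.
  have h4 := ler_wpM2l op0' h3.
  exact: comb h1 (le_trans h2 h4) D2p.
have MD0' : 0 <= M' / D2 by rewrite divr_ge0 // ltW.
have opl2 := opnorm_le MD0' Bnd2; rewrite E lee_fin in opl2.
have hM2 : M <= (1 + eps) * M'.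
  apply: le_trans opl2 _; rewrite ler_pdivrMr // mulrAC.
  by rewrite -{1}(mul1r M') ler_wpM2r.
rewrite mE mE' E E' -!EFinM !lee_fin; split => //.
rewrite [_ * M]mulrC ler_pdivrMr; last lra.
by rewrite mulrC.
Qed.
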